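(* Let $C$ be a parity complex. For all $M,P\subseteq C$ and $x\in C$, if $x^+$ moves $M$ to $P$ and $M$ is receptive, then $x^-$ moves $M$ to $P$.
   Context: A parity complex consists of a set $C=\bigsqcup_{n\ge 0}C_n$ graded by dimension, together with, for each $n\ge 0$ and each $x\in C_{n+1}$, two disjoint, non-empty, finite subsets $x^-,x^+\subseteq C_n$ (for $x\in C_0$ put $x^-=x^+=\emptyset$), subject to Axioms 1, 2, 3A, 3B below. Notation: for $S\subseteq C$, $S^-=\bigcup_{w\in S}w^-$, $S^+=\bigcup_{w\in S}w^+$, $S^\mp=S^-\setminus S^+$, $S^\pm=S^+\setminus S^-$; $x^{-+}=(x^-)^+$, etc. For $S,T\subseteq C$ write $S\perp T$ when $S^-\cap T^-=\emptyset$ and $S^+\cap T^+=\emptyset$; $x\perp y$ means $\{x\}\perp\{y\}$. With $S_n=S\cap C_n$, a set $S$ is well-formed when $S_0$ has at most one element and for every $n>0$ and all distinct $x,y\in S_n$, $x\perp y$. Write $x<y$ when $x^+\cap y^-\neq\emptyset$, and let $\lhd$ be the reflexive transitive closure of $<$. Axioms: (1) for all $x$, $x^{++}\cup x^{--}=x^{-+}\cup x^{+-}$; (2) for all $x$, $x^-$ and $x^+$ are well-formed; (3A) $x\lhd y$ and $y\lhd x$ imply $x=y$; (3B) if $x\lhd y$ then there is no $z$ with $x\in z^+$ and $y\in z^-$, and no $z$ with $y\in z^+$ and $x\in z^-$. For $S,M,P\subseteq C$, $S$ moves $M$ to $P$ when $M=(P\cup S^-)\setminus S^+$ and $P=(M\cup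 S^+)\setminus S^-$. A set $S\subseteq C$ is receptive when for all $x\in C$: if $x^{-+}\cap x^{++}\subseteq S$ and $S\cap x^{--}=\emptyset$ then $S\cap x^{+-}=\emptyset$; and if $x^{+-}\cap x^{--}\subseteq S$ and $S\cap x^{++}=\emptyset$ then $S\cap x^{-+}=\emptyset$. *)

(* Defs.v *)
From Stdlib Require Import List Relations.

Set Implicit Arguments.

Definition pset (T : Type) := T -> Prop.

Section ParityComplex.
Variable T : Type.
(* dim x = n  means  x ∈ C_n ;  mi x y  means  y ∈ x^- ;  pl x y  means  y ∈ x^+ *)
Variable dim : T -> nat.
Variable mi pl : T -> T -> Prop.

Definition seteq (A B : pset T) : Prop := forall y, A y <-> B y.
Definition setU (A B : pset T) : pset T := fun y => A y \/ B y.
Definition setD (A B : pset T) : pset T := fun y => A y /\ ~ B y.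
Definition setI (A B : pset T) : pset T := fun y => A y /\ B y.
Definition subset (A B : pset T) : Prop := forall y, A y -> B y.
Definition disjointP (A B : pset T) : Prop := forall y, A y -> B y -> False.
Definition finiteP (A : pset T) : Prop := exists l : list T, forall y, A y -> In y l.

Definition xm (x : T) : pset T := mi x.
Definition xp (x : T) : pset T := pl x.

Definition Sm (S : pset T) : pset T := fun y => exists w, S w /\ mi w y.
Definition Sp (S : pset T) : pset T := fun y => exists w, S w /\ pl w y.
Definition Smp (S : pset T) : pset T := setD (Sm S) (Sp S).
Definition Spm (S : pset T) : pset T := setD (Sp S) (Sm S).

Definition perp (S U : pset T) : Prop :=
  disjointP (Sm S) (Sm U) /\ disjointP (Sp S) (Sp U).
Definition perp1 (x y : T) : Prop := perp (eq x) (eq y).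

Definition layer (S : pset T) (n : nat) : pset T := fun y => S y /\ dim y = n.

Definition well_formed (S : pset T) : Prop :=
  (forall a b, layer S 0 a -> layer S 0 b -> a = b) /\
  (forall n, 0 < n -> forall a b, layer S n a -> layer S n b -> a <> b -> perp1 a b).

Definition ltp (x y : T) : Prop := exists z, pl x z /\ mi y z.
Definition lhd : T -> T -> Prop := clos_refl_trans T ltp.

Record is_parity_complex : Prop := {
  pc_grading : forall x y, (mi x y \/ pl x y) -> dim x = S (dim y);
  pc_disjoint : forall x, disjointP (xm x) (xp x);
  pc_nonempty_m : forall x, 0 < dim x -> exists y, mi x y;
  pc_nonempty_p : forall x, 0 < dim x -> exists y, pl x y;
  pc_finite_m : forall x, finiteP (xm x);
  pc_finite_p : forall x, finiteP (xp x);
  pc_ax1 : forall x, seteq (setU (Sp (xp x)) (Sm (xm x)))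
                           (setU (Sp (xm x)) (Sm (xp x)));
  pc_ax2m : forall x, well_formed (xm x);
  pc_ax2p : forall x, well_formed (xp x);
  pc_ax3A : forall x y, lhd x y -> lhd y x -> x = y;
  pc_ax3B : forall x y, lhd x y ->
      (~ exists z, pl z x /\ mi z y) /\ (~ exists z, pl z y /\ mi z x)
}.
(* Note: pc_grading forces dim-0 elements to have empty x^- and x^+,
   and for x ∈ C_{n+1}, x^-, x^+ ⊆ C_n. *)

Definition moves (S M P : pset T) : Prop :=
  seteq M (setD (setU P (Sm S)) (Sp S)) /\
  seteq P (setD (setU M (Sp S)) (Sm S)).

Definition receptive (S : pset T) : Prop :=
  forall x,
    (subset (setI (Sp (xm x)) (Sp (xp x))) S ->
       (forall y, S y -> ~ Sm (xm x) y) ->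
       forall y, S y -> ~ Sm (xp x) y) /\
    (subset (setI (Sm (xp x)) (Sm (xm x))) S ->
       (forall y, S y -> ~ Sp (xp x) y) ->
       forall y, S y -> ~ Sp (xm x) y).

End ParityComplex.

(* Main.v *)
Require Import Defs.
From Stdlib Require Import List Relations Classical.

Theorem lemma3p1 (T : Type) (dim : T -> nat) (mi pl : T -> T -> Prop)
  (HC : is_parity_complex dim mi pl)
  (M P : pset T) (x : T) :
  moves mi pl (xp pl x) M P -> receptive mi pl M ->
  moves mi pl (xm mi x) M P.
Proof.
  intros [HM HP] Hrec.
  unfold seteq, setD, setU, Sm, Sp, xm, xp in *.
  set (A := fun y => exists w, pl x w /\ pl w y).
  set (B := fun y => exists w, pl x w /\ mi w y).
  set (Cc := fun y => exists w, mi x w /\ pl w y).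
  set (D := fun y => exists w, mi x w /\ mi w y).
  assert (AD : forall y, A y -> D y -> False).
  { intros y [z [Hz1 Hz2]] [w [Hw1 Hw2]].
    assert (Hl : lhd mi pl z w) by (unfold lhd; apply rt_step; exists y; split; assumption).
    destruct (pc_ax3B HC Hl) as [H1 _]. apply H1. exists x; auto. }
  assert (BC : forall y, B y -> Cc y -> False).
  { intros y [z [Hz1 Hz2]] [w [Hw1 Hw2]].
    assert (Hl : lhd mi pl w z) by (unfold lhd; apply rt_step; exists y; split; assumption).
    destruct (pc_ax3B HC Hl) as [_ H1]. apply H1. exists x; auto. }
  assert (AX1 : forall y, (A y \/ D y) <-> (Cc y \/ B y)).
  { intro y. pose proof (pc_ax1 HC x y) as H.
    unfold seteq, setU, Sp, Sm, xp, xm in H. exact H. }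
  assert (MC : forall y, M y -> Cc y -> False).
  { destruct (Hrec x) as [_ H2].
    intros y My Cy.
    refine (H2 _ _ y My Cy).
    - intros z [Bz Dz]. apply (proj2 (HM z)). split.
      + right. exact Bz.
      + intro Az. exact (AD z Az Dz).
    - intros z Mz Az. apply (proj1 (HM z) Mz). exact Az. }
  split; intro y0; unfold setD, setU, Sm, Sp;
  pose proof (HM y0) as HMy; pose proof (HP y0) as HPy;
  change (exists w, mi x w /\ mi w y0) with (D y0) in *;
  change (exists w, mi x w /\ pl w y0) with (Cc y0) in *;
  change (exists w, pl x w /\ mi w y0) with (B y0) in *;
  change (exists w, pl x w /\ pl w y0) with (A y0) in *;
  pose proof (AX1 y0) as [X1 X2]; pose proof (AD y0) as Z1; pose proof (BC y0) as Z2;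
  pose proof (MC y0) as Z3; clear HM HP AX1 AD BC MC Hrec HC; clearbody A B Cc D;
  destruct HMy as [HM1 HM2]; destruct HPy as [HP1 HP2]; split.
  - intro Hm. destruct (HM1 Hm) as [[Hp|Hb] Na]; split; auto.
    + destruct (X2 (or_intror Hb)) as [Ha|Hd]; [contradiction|auto].
  - intros [[Hp|Hd] Nc].
    + destruct (HP1 Hp) as [[Hm|Ha] Nb]; auto.
      destruct (X1 (or_introl Ha)); contradiction.
    + apply HM2. split.
      * destruct (X1 (or_intror Hd)); [contradiction|auto].
      * intro Ha; exact (Z1 Ha Hd).
  - intro Hp. destruct (HP1 Hp) as [[Hm|Ha] Nb]; split.
    + auto.
    + intro Hd. destruct (X1 (or_intror Hd)) as [Hc|Hb]; [exact (Z3 Hm Hc)|contradiction].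
    + right. destruct (X1 (or_introl Ha)); [auto|contradiction].
    + intro Hd; exact (Z1 Ha Hd).
  - intros [[Hm|Hc] Nd].
    + destruct (HM1 Hm) as [[Hp|Hb] Na]; auto.
      destruct (X2 (or_intror Hb)); contradiction.
    + apply HP2. split.
      * destruct (X2 (or_introl Hc)); [auto|contradiction].
      * intro Hb; exact (Z2 Hb Hc).
Qed.
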